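(* Let $(A,\mu)$ be a commutative associative algebra (with $\mu(a\otimes b)=a\cdot b$), let $\gamma:A\to A$ be an algebra map and let $D:A\to A$ be a linear map with $D(a\cdot b)=\gamma(a)\cdot D(b)+D(a)\cdot\gamma(b)$ for all $a,b\in A$. Assume moreover that $D\circ\gamma=\gamma\circ D$. Define a new multiplication on $A$ by $a\ast b=a\cdot D(b)$. Then $(A,\ast,\mathrm{id}_A,\gamma)$ is a BiHom-Novikov algebra.
   Context: Work over a field. A BiHom-Novikov algebra is a 4-tuple $(A,\mu,\alpha,\beta)$ with $\mu:A\otimes A\to A$ (written $x\cdot y$) and commuting linear maps $\alpha,\beta:A\to A$ such that for all $x,y,z\in A$: $\alpha(x\cdot y)=\alpha(x)\cdot\alpha(y)$, $\beta(x\cdot y)=\beta(x)\cdot\beta(y)$, $(\beta(x)\cdot\alpha(y))\cdot\beta(z)-\alpha\beta(x)\cdot(\alpha(y)\cdot z)=(\beta(y)\cdot\alpha(x))\cdot\beta(z)-\alpha\beta(y)\cdot(\alpha(x)\cdot z)$, and $(x\cdot\beta(y))\cdot\alpha\beta(z)=(x\cdot\beta(z))\cdot\alpha\beta(y)$. *)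

(* Defs.v *)
From HB Require Import structures.
From mathcomp Require Import all_boot all_order all_algebra.
Set Implicit Arguments. Unset Strict Implicit. Unset Printing Implicit Defensive.
Import GRing.Theory.
Local Open Scope ring_scope.

Definition is_linear_map (K : fieldType) (A : lmodType K) (f : A -> A) : Prop :=
  forall (c : K) (x y : A), f (c *: x + y) = c *: f x + f y.

(* A K-bilinear map A x A -> A (i.e. a linear map A (x) A -> A). *)
Definition is_bilinear_map (K : fieldType) (A : lmodType K) (mu : A -> A -> A) : Prop :=
  (forall (c : K) (x y z : A), mu (c *: x + y) z = c *: mu x z + mu y z) /\
  (forall (c : K) (x y z : A), mu x (c *: y + z) = c *: mu x y + mu x z).

Definition is_comm_assoc_algebra (K : fieldType) (A : lmodType K) (mu : A -> A -> A) : Prop :=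
  is_bilinear_map mu /\
  (forall x y : A, mu x y = mu y x) /\
  (forall x y z : A, mu (mu x y) z = mu x (mu y z)).

Definition is_algebra_map (K : fieldType) (A : lmodType K) (mu : A -> A -> A) (g : A -> A) : Prop :=
  is_linear_map g /\ (forall x y : A, g (mu x y) = mu (g x) (g y)).

Definition BiHomNovikov (K : fieldType) (A : lmodType K) (mu : A -> A -> A)
    (alpha beta : A -> A) : Prop :=
  is_bilinear_map mu /\ is_linear_map alpha /\ is_linear_map beta /\
  (forall x : A, alpha (beta x) = beta (alpha x)) /\
  (forall x y : A, alpha (mu x y) = mu (alpha x) (alpha y)) /\
  (forall x y : A, beta (mu x y) = mu (beta x) (beta y)) /\
  (forall x y z : A,
      mu (mu (beta x) (alpha y)) (beta z) - mu (alpha (beta x)) (mu (alpha y) z)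
    = mu (mu (beta y) (alpha x)) (beta z) - mu (alpha (beta y)) (mu (alpha x) z)) /\
  (forall x y z : A,
      mu (mu x (beta y)) (alpha (beta z)) = mu (mu x (beta z)) (alpha (beta y))).

(* Main.v *)
Require Import Defs.
From HB Require Import structures.
From mathcomp Require Import all_boot all_order all_algebra.
Local Open Scope ring_scope.
Import GRing.Theory.

Theorem proposition2p11 (K : fieldType) (A : lmodType K) (mu : A -> A -> A)
    (gamma D : A -> A) :
  is_comm_assoc_algebra mu ->
  is_algebra_map mu gamma ->
  is_linear_map D ->
  (forall a b : A, D (mu a b) = mu (gamma a) (D b) + mu (D a) (gamma b)) ->
  (forall a : A, D (gamma a) = gamma (D a)) ->
  BiHomNovikov (fun a b => mu a (D b)) id gamma.
Proof.
move=> [[Bl Br] [Hc Ha]] [Lg Mg] LD HD DG.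
have addr : forall x y z, mu x (y + z) = mu x y + mu x z.
  by move=> x y z; rewrite -[y]scale1r Br !scale1r.
rewrite /BiHomNovikov /is_bilinear_map /is_linear_map; split; [split|].
  by move=> c x y z; rewrite Bl.
  by move=> c x y z; rewrite LD Br.
split; first by [].
split; first by [].
split; first by [].
split; first by [].
split; first by move=> x y /=; rewrite Mg DG.
split.
  move=> x y z /=.
  rewrite !HD !addr !Ha !DG.
  have -> : mu (gamma x) (mu (gamma y) (D (D z))) = mu (gamma y) (mu (gamma x) (D (D z))).
    by rewrite -!Ha (Hc (gamma x)).
  have E : forall a b : A, a - (b + a) = - b.
    by move=> a b; rewrite opprD addrCA subrr addr0.
  by rewrite !E.
move=> x y z /=.
by rewrite !Ha (Hc (D (gamma y))).
Qed.
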